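(* Let $(D,F,B)$ with $D=(\mathcal V,\mathcal A)$ be a restricted instance (i.e. $\mathcal B\subseteq\mathcal F$) with $\mathcal F\neq\emptyset$, and let $\mathrm{TC}(D)=(\mathcal V,\mathcal A')$ be the transitive closure of $D$, equipped with the same functions $F$ and $B$. Then $(D,F,B)$ admits a positive answer to the All-ST problem if and only if $(\mathrm{TC}(D),F,B)$ admits a tree-like solution to the All-ST problem such that the underlying graph of the union of its walks has at most $2|\mathcal F|-1$ vertices.
   Context: A snow team instance is a digraph $D=(\mathcal V,\mathcal A)$ of order $n$ whose underlying simple undirected graph is connected, together with functions $F:\mathcal V\to\{0,1\}$ and $B:\mathcal V\to\mathbb N$. Vertices of $\mathcal F=F^{-1}(1)$ are called facilities (terminals), vertices of $\mathcal B=B^{-1}(\mathbb N^+)$ are called snow team bases, and $\mathbf k_B=\sum_{v\in\mathcal V}B(v)$. The Snow Team problem (ST) asks: do there exist $\mathbf k_B$ directed walks in $D$, exactly $B(v)$ of which start at each vertex $v\in\mathcal V$, such that, letting $H$ be the subgraph of $D$ consisting of the vertices and arcs of these walks, all vertices of $\mathcal F$ lie in one connected component of the underlying undirected graph of $H$? Such a family of walks is called a solution. The All-ST problem is the ST problem restricted to instances satisfying $\mathcal B\subseteq\mathcal F$ (called restricted instances). The transitive closure $\mathrm{TC}(D)$ has vertex set $\mathcal V$ and an arc $(u,v)$, $u\ne v$, whenever $D$ contains a directed path from $u$ to $v$. A solution $\mathcal W$ is tree-like if its walks are strongly arc-distinct (no arc is traversed by two walks or twice by one walk, and no two walks, or one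 walk, traverse both an arc $(u,v)$ and its reverse $(v,u)$), and the underlying undirected graph of the union of the walks is acyclic and contains a Steiner tree for $\mathcal F$ (a subtree containing all vertices of $\mathcal F$). *)

(* Defs.v *)
From mathcomp Require Import all_boot.
Set Implicit Arguments. Unset Strict Implicit. Unset Printing Implicit Defensive.

Section SnowTeam.
Variable V : finType.

Definition uconnected (A : rel V) : Prop :=
  forall u v, connect (fun x y => A x y || A y x) u v.

Definition tc (A : rel V) : rel V := fun u v => (u != v) && connect A u v.

(* A walk is given by its start vertex and the sequence of subsequent vertices. *)
Definition walk_ok (A : rel V) (w : V * seq V) : bool := path A w.1 w.2.
Definition wverts (w : V * seq V) : seq V := w.1 :: w.2.
Definition warcs (w : V * seq V) : seq (V * V) := zip (w.1 :: w.2) w.2.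

Definition sol_verts (W : seq (V * seq V)) : {set V} :=
  [set x | has (fun w => x \in wverts w) W].
Definition sol_arcs (W : seq (V * seq V)) : seq (V * V) :=
  flatten (map warcs W).

Definition urel (W : seq (V * seq V)) : rel V :=
  fun x y => ((x, y) \in sol_arcs W) || ((y, x) \in sol_arcs W).

Definition facilities_connected (F : V -> bool) (W : seq (V * seq V)) : Prop :=
  forall f g, F f -> F g -> f \in sol_verts W /\ connect (urel W) f g.

Definition is_solution (A : rel V) (F : V -> bool) (B : V -> nat)
    (W : seq (V * seq V)) : Prop :=
  [/\ all (walk_ok A) W,
      (forall v, count (fun w => w.1 == v) W = B v)
    & facilities_connected F W].

Definition strongly_arc_distinct (W : seq (V * seq V)) : bool :=
  uniq (sol_arcs W) &&
  all (fun e => (e.2, e.1) \notin sol_arcs W) (sol_arcs W).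

Definition acyclic_union (W : seq (V * seq V)) : Prop :=
  forall c : seq V, 3 <= size c -> ~~ ucycleb (urel W) c.

(* Tree-like solution. The Steiner-tree condition (a subtree of the forest
   containing all facilities) is expressed as: all facilities lie in one
   connected component of the (acyclic) union. *)
Definition tree_like (A : rel V) (F : V -> bool) (B : V -> nat)
    (W : seq (V * seq V)) : Prop :=
  [/\ is_solution A F B W, strongly_arc_distinct W,
      acyclic_union W & facilities_connected F W].

End SnowTeam.

(* Main.v *)
Require Import Defs.
From mathcomp Require Import all_boot zify.
Set Implicit Arguments. Unset Strict Implicit. Unset Printing Implicit Defensive.

Definition addrel {V : eqType} (e : rel V) (p q : V) : rel V :=
  fun x y => [|| e x y, (x == p) && (y == q) | (x == q) && (y == p)].

Lemma addrel_sym {V : eqType} (e : rel V) p q : symmetric e -> symmetric (addrel e p q).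
Proof.
move=> se x y; rewrite /addrel se; congr (_ || _); rewrite orbC; congr (_ || _); by rewrite andbC.
Qed.

Lemma connect_add {V : finType} (e : rel V) p q (se : symmetric e) a b :
  connect (addrel e p q) a b =
  [|| connect e a b, connect e a p && connect e q b | connect e a q && connect e p b].
Proof.
have cs := sym_connect_sym se.
have sub : subrel (connect e) (connect (addrel e p q)).
  apply: connect_sub => x y exy; apply: connect1; by rewrite /addrel exy.
apply/idP/idP; last first.
  case/or3P=> [/sub //|/andP[h1 h2]|/andP[h1 h2]].
  - apply: connect_trans (sub _ _ h1) _; apply: connect_trans (sub _ _ h2).
    by apply: connect1; rewrite /addrel !eqxx orbT.
  - apply: connect_trans (sub _ _ h1) _; apply: connect_trans (sub _ _ h2).
    by apply: connect1; rewrite /addrel !eqxx !orbT.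
case/connectP=> s ps ->{b}; elim: s a ps => [|y s IH] a /=.
  by rewrite connect0.
case/andP=> ay /IH {IH}; set b := last y s.
case/or3P: ay => [ay|/andP[/eqP-> /eqP->]|/andP[/eqP-> /eqP->]].
- have ay' := connect1 ay.
  case/or3P=> [h|/andP[h1 h2]|/andP[h1 h2]].
  + by rewrite (connect_trans ay' h).
  + by rewrite (connect_trans ay' h1) h2 orbT.
  + by rewrite (connect_trans ay' h1) h2 !orbT.
- case/or3P=> [h|/andP[h1 h2]|/andP[h1 h2]].
  + by rewrite connect0 h orbT.
  + by rewrite connect0 h2 orbT.
  + by rewrite h2.
- case/or3P=> [h|/andP[h1 h2]|/andP[h1 h2]].
  + by rewrite connect0 h !orbT.
  + by rewrite h2.
  + by rewrite connect0 h2 !orbT.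
Qed.

Definition acyc {V : eqType} (e : rel V) := forall c : seq V, 3 <= size c -> ~~ ucycleb e c.

Lemma acyc_sub {V : eqType} (e e' : rel V) : subrel e' e -> acyc e -> acyc e'.
Proof.
move=> s ac c hc; apply/negP => /andP[cy u].
by move: (ac c hc); rewrite /ucycleb (sub_cycle s cy) u.
Qed.

Lemma acyc_eq {V : eqType} (e e' : rel V) : e =2 e' -> acyc e -> acyc e'.
Proof. by move=> h; apply: acyc_sub => x y; rewrite h. Qed.

Lemma last_in {T : eqType} (y : T) r : r != [::] -> last y r \in r.
Proof. by case: r => // a r _; exact: (mem_last a r). Qed.

Lemma acyc_add {V : finType} (e : rel V) p q :
  symmetric e -> acyc e -> ~~ connect e p q -> acyc (addrel e p q).
Proof.
move=> se ac npq c hc; apply/negP => /andP[cy u].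
have cs := sym_connect_sym se.
have ep : forall x y, x != p -> y != p -> addrel e p q x y -> e x y.
  by move=> x y xp yp; rewrite /addrel (negbTE xp) (negbTE yp) /= andbF !orbF.
case: (boolP (p \in c)) => pc; last first.
  have : cycle e c.
    apply: (sub_in_cycle (P := [pred x | x != p])) cy; last first.
      by apply/allP => x xc /=; apply: contraNneq pc => <-.
    by move=> x y /= xp yp; apply: ep.
  by move=> cy'; move: (ac c hc); rewrite /ucycleb cy' u.
case: (rot_to pc) => i r def.
have u' : uniq (p :: r) by rewrite -def rot_uniq.
have cy' : cycle (addrel e p q) (p :: r) by rewrite -def rot_cycle.
have hs : 3 <= size (p :: r) by rewrite -def size_rot.
case: r def u' cy' hs => [|y r] // def u'; rewrite /= rcons_path => /andP[epy /andP[pr ezp]] hs.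
move: u'; rewrite /= inE negb_or => /andP[/andP[py pr'] /andP[yr ur]].
set z := last y r in ezp.
have zr : z \in r by apply: last_in; case: (r) hs.
have yz : y != z by apply: contraNneq yr => ->.
have zp : z != p by apply: contraNneq pr' => <-.
have pyr : path e y r.
  apply: (sub_in_path (P := [pred x | x != p])); last exact: pr.
    by move=> x w /= xp wp; apply: ep.
  by rewrite /= eq_sym py; apply/allP => x /= xr; apply: contraNneq pr' => <-.
have cyz : connect e y z by apply/connectP; exists r.
move: epy ezp; rewrite /addrel.
case/or3P => [epy|/andP[_ /eqP yq]|/andP[_ /eqP yp]]; last by rewrite yp eqxx in py.
- case/or3P => [ezp|/andP[/eqP zp' _]|/andP[/eqP zq _]].
  + have cyc : cycle e (p :: y :: r) by rewrite /= rcons_path epy pyr ezp.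
    move: (ac (p :: y :: r) hs); rewrite /ucycleb cyc /=.
    by rewrite inE negb_or py pr' yr ur.
  + by rewrite zp' eqxx in zp.
  + move: npq; rewrite -zq; apply/negP/negPn.
    exact: connect_trans (connect1 epy) cyz.
- case/or3P => [ezp|/andP[/eqP zp' _]|/andP[/eqP zq _]].
  + move: npq; apply/negP/negPn; rewrite cs -yq.
    exact: connect_trans cyz (connect1 ezp).
  + by rewrite zp' eqxx in zp.
  + by move: yz; rewrite yq zq eqxx.
Qed.

Definition comp {V : finType} (e : rel V) x : {set V} := [set y | connect e x y].

Definition Bnd {V : finType} (e : rel V) (S Rq : {set V}) :=
  forall x, x \in S -> #|comp e x| < 2 * #|Rq :&: comp e x|.

Lemma Bnd_eq {V : finType} (e e' : rel V) S Rq :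
  connect e =2 connect e' -> Bnd e S Rq -> Bnd e' S Rq.
Proof.
move=> h b x xS; have -> : comp e' x = comp e x by apply/setP=> y; rewrite !inE h.
exact: b.
Qed.

Lemma Bgen {V : finType} (e e' : rel V) (S S' Rq Rq' M : {set V}) :
  Bnd e S Rq ->
  (forall x y, connect e' x y = connect e x y || (x \in M) && (y \in M)) ->
  (forall x y, x \in M -> connect e x y -> y \in M) ->
  {subset S' <= [predU S & M]} -> Rq \subset Rq' ->
  #|M| < 2 * #|Rq' :&: M| -> Bnd e' S' Rq'.
Proof.
move=> b ce cl sS sR cM x xS'.
case: (boolP (x \in M)) => xM.
  have -> : comp e' x = M.
    apply/setP=> y; rewrite inE ce xM /=; apply/idP/idP; last by move=> ->; rewrite orbT.
    by case/orP => // /(cl _ _ xM).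
  exact: cM.
have xS : x \in S by move: (sS _ xS'); rewrite inE (negbTE xM) orbF.
have -> : comp e' x = comp e x by apply/setP=> y; rewrite !inE ce (negbTE xM) orbF.
apply: (leq_trans (b x xS)); rewrite leq_mul2l /=; apply: subset_leq_card.
by apply: setSI.
Qed.

Lemma connect_addM {V : finType} (e : rel V) p q (se : symmetric e) x y :
  connect (addrel e p q) x y =
  connect e x y || (x \in comp e p :|: comp e q) && (y \in comp e p :|: comp e q).
Proof.
have cs := sym_connect_sym se.
rewrite connect_add // !inE; apply/idP/idP.
  case/or3P => [-> //|/andP[h1 h2]|/andP[h1 h2]]; apply/orP; right.
    by rewrite (cs p x) h1 h2 !orbT.
  by rewrite (cs q x) h1 h2 !orbT.
case/orP => [-> //|/andP[/orP[h1|h1] /orP[h2|h2]]].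
- by rewrite (connect_trans _ h2) // cs.
- by rewrite (cs x p) h1 h2 orbT.
- by rewrite (cs x q) h1 h2 !orbT.
- by rewrite (connect_trans _ h2) // cs.
Qed.

Lemma iso_connect {V : finType} (e : rel V) v y :
  (forall y, ~~ e v y) -> connect e v y -> y = v.
Proof.
move=> iso /connectP[[|z s] /=]; first by [].
by rewrite (negbTE (iso z)).
Qed.

Lemma comp_disj {V : finType} (e : rel V) c1 c2 (se : symmetric e) :
  ~~ connect e c1 c2 -> comp e c1 :&: comp e c2 = set0.
Proof.
move=> n; apply/setP => y; rewrite !inE; apply/negP => /andP[h1 h2].
move/negP: n; apply; apply: connect_trans h1 _; by rewrite (sym_connect_sym se).
Qed.

Lemma card_disjU {V : finType} (A B : {set V}) : A :&: B = set0 -> #|A :|: B| = #|A| + #|B|.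
Proof. by move=> h; rewrite cardsU h cards0 subn0. Qed.

Definition ur {V : eqType} (L : seq (V * V)) : rel V :=
  fun x y => ((x, y) \in L) || ((y, x) \in L).
Definition arcsOK {V : eqType} (L : seq (V * V)) :=
  uniq L && all (fun e => (e.2, e.1) \notin L) L.
Definition ends_in {V : finType} (L : seq (V * V)) (S : {set V}) :=
  forall p, p \in L -> (p.1 \in S) && (p.2 \in S).
Definition FS {V : finType} (L : seq (V * V)) (S Rq : {set V}) :=
  [/\ arcsOK L, acyc (ur L), ends_in L S & Bnd (ur L) S Rq].

Lemma ur_sym {V : eqType} (L : seq (V * V)) : symmetric (ur L).
Proof. by move=> x y; rewrite /ur orbC. Qed.

Lemma ur_cons {V : eqType} (L : seq (V * V)) p q : ur ((p, q) :: L) =2 addrel (ur L) p q.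
Proof.
move=> x y; rewrite /ur /addrel !inE !xpair_eqE.
by case: ((x, y) \in L); case: ((y, x) \in L); case: (x == p); case: (y == q);
  case: (x == q); case: (y == p).
Qed.

Lemma ur_perm {V : eqType} (L1 L2 : seq (V * V)) : perm_eq L1 L2 -> ur L1 =2 ur L2.
Proof. by move=> h x y; rewrite /ur !(perm_mem h). Qed.

Lemma arcsOK_perm {V : eqType} (L1 L2 : seq (V * V)) :
  perm_eq L1 L2 -> arcsOK L1 = arcsOK L2.
Proof.
move=> h; rewrite /arcsOK (perm_uniq h) (perm_all _ h); congr (_ && _).
by apply: eq_all => z; rewrite (perm_mem h).
Qed.

Lemma arcsOK_tail {V : eqType} (a : V * V) L : arcsOK (a :: L) -> arcsOK L.
Proof.
case/andP => /= /andP[_ u] /andP[_ al]; rewrite /arcsOK u /=.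
by apply/allP => z zL; move/allP: al => /(_ z zL); rewrite inE negb_or => /andP[].
Qed.

Lemma arcsOK_cons {V : eqType} (L : seq (V * V)) p q :
  arcsOK L -> p != q -> ~~ ur L p q -> arcsOK ((p, q) :: L).
Proof.
case/andP => u al pq; rewrite /ur negb_or => /andP[n1 n2].
rewrite /arcsOK /= n1 u /= inE negb_or n2 andbT xpair_eqE.
rewrite (negbTE pq) andbF /=; apply/allP => z zL; rewrite inE negb_or.
move/allP: al => /(_ z zL) ->; rewrite andbT.
by apply: contraNneq n2; case: z zL => a b /= zL [<- <-].
Qed.

Lemma arcsOK_noloop {V : eqType} (L : seq (V * V)) p : arcsOK L -> p \in L -> p.1 != p.2.
Proof.
case/andP => _ /allP al; case: p => a b pL /=; move: (al _ pL) => /=.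
by apply: contraNneq => ab; rewrite ab in pL *.
Qed.

Lemma ur_iso {V : finType} (L : seq (V * V)) S v :
  ends_in L S -> v \notin S -> forall y, ~~ ur L v y.
Proof.
move=> ei vS y; rewrite /ur; apply/norP; split; apply/negP => /ei /andP[/= h1 h2].
  by rewrite h1 in vS.
by rewrite h2 in vS.
Qed.

Lemma notconn {V : finType} (L : seq (V * V)) p q :
  ~~ connect (ur L) p q -> (p != q) && ~~ ur L p q.
Proof.
move=> n; apply/andP; split.
  by apply: contraNneq n => ->; rewrite connect0.
by apply: contra n => h; apply: connect1.
Qed.

Lemma compU1 {V : finType} (e : rel V) v : (forall y, ~~ e v y) -> comp e v = [set v].
Proof.
move=> iso; apply/setP => y; rewrite !inE; apply/idP/idP.
  by move/(iso_connect iso) ->.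
by move/eqP ->; rewrite connect0.
Qed.

Lemma OP1 {V : finType} (L : seq (V * V)) (S Rq : {set V}) c v :
  FS L S Rq -> c \in S -> v \notin S -> FS ((c, v) :: L) (v |: S) (v |: Rq).
Proof.
case=> ok ac ei b cS vS.
have iso := ur_iso ei vS.
have se := @ur_sym _ L; have cs := sym_connect_sym se.
have cv : c != v by apply: contraNneq vS => <-.
have ncv : ~~ connect (ur L) c v.
  by apply/negP; rewrite cs => /(iso_connect iso) cv'; rewrite cv' eqxx in cv.
have/andP[_ nur] := notconn ncv.
split.
- exact: arcsOK_cons.
- apply: acyc_eq (fun x y => esym (ur_cons L c v x y)) _; exact: acyc_add.
- move=> p; rewrite inE => /orP[/eqP->|/ei/andP[h1 h2]]; first by rewrite /= !inE eqxx cS orbT.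
  by rewrite !inE h1 h2 !orbT.
apply: (Bgen (M := comp (ur L) c :|: comp (ur L) v) b).
- by move=> x y; rewrite (eq_connect (ur_cons L c v)) connect_addM.
- move=> x y; rewrite !inE => /orP[h|h] hxy; first by rewrite (connect_trans h hxy).
  by rewrite (connect_trans h hxy) orbT.
- move=> x; rewrite !inE; case/orP => [/eqP->|->] //=.
  by rewrite connect0 !orbT.
- by apply/subsetP => x; rewrite !inE => ->; rewrite orbT.
rewrite (compU1 iso).
have vc : v \notin comp (ur L) c by rewrite inE.
rewrite setUC cardsU1 vc add1n.
have -> : (v |: Rq) :&: (v |: comp (ur L) c) = v |: (Rq :&: comp (ur L) c).
  by apply/setP => x; rewrite !inE; case: (x == v).
rewrite cardsU1 inE (negbTE vc) andbF add1n.
by move: (b c cS); rewrite mulnS ltnS => h; apply: (leq_trans h); rewrite leqnSn.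
Qed.

Lemma add_edge {V : finType} (L : seq (V * V)) p q :
  arcsOK L -> acyc (ur L) -> ~~ connect (ur L) p q ->
  arcsOK ((p, q) :: L) /\ acyc (ur ((p, q) :: L)).
Proof.
move=> ok ac n; have/andP[pq nur] := notconn n; split; first exact: arcsOK_cons.
apply: acyc_eq (fun x y => esym (ur_cons L p q x y)) _; apply: acyc_add => //.
exact: ur_sym.
Qed.

Lemma ends_cons {V : finType} (L : seq (V * V)) (S : {set V}) p q :
  ends_in L S -> p \in S -> q \in S -> ends_in ((p, q) :: L) S.
Proof.
by move=> ei pS qS z; rewrite inE => /orP[/eqP->|/ei]; [rewrite /= pS qS|].
Qed.

Lemma ends_sub {V : finType} (L : seq (V * V)) (S S' : {set V}) :
  ends_in L S -> S \subset S' -> ends_in L S'.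
Proof.
move=> ei /subsetP sS z /ei /andP[h1 h2]; by rewrite (sS _ h1) (sS _ h2).
Qed.

Lemma OP2 {V : finType} (L : seq (V * V)) (S Rq : {set V}) c1 c2 :
  FS L S Rq -> c1 \in S -> c2 \in S -> ~~ connect (ur L) c1 c2 ->
  FS ((c1, c2) :: L) S Rq.
Proof.
case=> ok ac ei b c1S c2S n.
have se := @ur_sym _ L; have cs := sym_connect_sym se.
case: (add_edge ok ac n) => ok' ac'.
split => //; first exact: ends_cons.
apply: (Bgen (M := comp (ur L) c1 :|: comp (ur L) c2) b).
- by move=> x y; rewrite (eq_connect (ur_cons L c1 c2)) connect_addM.
- move=> x y; rewrite !inE => /orP[h|h] hxy; first by rewrite (connect_trans h hxy).
  by rewrite (connect_trans h hxy) orbT.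
- by move=> x; rewrite !inE => ->.
- exact: subxx.
have d := comp_disj se n.
rewrite card_disjU // setIUr card_disjU; last first.
  by rewrite setIACA d setI0.
move: (b _ c1S) (b _ c2S) => h1 h2; lia.
Qed.

Lemma conn_M {V : finType} (e e' : rel V) (M : {set V}) :
  symmetric e -> subrel e e' ->
  (forall a b, e' a b -> e a b || (a \in M) && (b \in M)) ->
  (forall a b, a \in M -> connect e a b -> b \in M) ->
  (forall a b, a \in M -> b \in M -> connect e' a b) ->
  forall x y, connect e' x y = connect e x y || (x \in M) && (y \in M).
Proof.
move=> se sub cl clM conM x y; have cs := sym_connect_sym se; apply/idP/idP; last first.
  case/orP => [|/andP[xM yM]]; last exact: conM.
  by apply: connect_sub => a b /sub/connect1.
case/connectP => s ps ->{y}; elim/last_ind: s ps => [|s z IH]; first by rewrite connect0.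
rewrite rcons_path last_rcons => /andP[/IH {IH} h /cl /orP[ez|/andP[yM zM]]].
  case/orP: h => [h|/andP[xM yM]]; first by rewrite (connect_trans h (connect1 ez)).
  by rewrite xM (clM _ _ yM (connect1 ez)) orbT.
case/orP: h => [h|/andP[xM _]]; last by rewrite xM zM orbT.
by rewrite zM (clM _ _ yM) ?orbT // cs.
Qed.

Lemma OP3 {V : finType} (L : seq (V * V)) (S Rq : {set V}) c1 c2 v :
  FS L S Rq -> c1 \in S -> c2 \in S -> ~~ connect (ur L) c1 c2 -> v \notin S ->
  FS ((c1, v) :: (c2, v) :: L) (v |: S) Rq.
Proof.
case=> ok ac ei b c1S c2S n vS.
have iso := ur_iso ei vS.
have se := @ur_sym _ L; have cs := sym_connect_sym se.
have niv : forall c, c \in S -> ~~ connect (ur L) c v.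
  move=> c cS; apply/negP; rewrite cs => /(iso_connect iso) cv.
  by rewrite -cv cS in vS.
have cvL : forall c, connect (ur L) v c -> c = v by move=> c /(iso_connect iso).
set L1 := (c2, v) :: L.
have C1 : forall x y, connect (ur L1) x y =
    connect (ur L) x y || (x \in comp (ur L) c2 :|: [set v]) && (y \in comp (ur L) c2 :|: [set v]).
  apply: conn_M => //.
  - by move=> a z h; rewrite /L1 ur_cons /addrel h.
  - move=> a z; rewrite /L1 ur_cons /addrel => /or3P[->//|/andP[/eqP-> /eqP->]|/andP[/eqP-> /eqP->]];
      by rewrite !inE connect0 eqxx !orbT.
  - move=> a z; rewrite !inE => /orP[h|/eqP->] hz; first by rewrite (connect_trans h hz).
    by rewrite (cvL _ hz) eqxx orbT.
  - have csub : subrel (connect (ur L)) (connect (ur L1)).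
      by apply: connect_sub => p q h; apply: connect1; rewrite /L1 ur_cons /addrel h.
    have e2 : ur L1 c2 v by rewrite /L1 ur_cons /addrel !eqxx orbT.
    have hv : forall a, a \in comp (ur L) c2 :|: [set v] -> connect (ur L1) a v.
      move=> a; rewrite !inE => /orP[h|/eqP->]; last exact: connect0.
      by apply: connect_trans (connect1 e2); apply: csub; rewrite cs.
    move=> a z aM zM; apply: connect_trans (hv _ aM) _.
    by rewrite (sym_connect_sym (@ur_sym _ L1)) hv.
case: (add_edge ok ac (niv _ c2S)) => ok1 ac1.
have n1 : ~~ connect (ur L1) c1 v.
  rewrite C1 (negbTE (niv _ c1S)) /= !inE cs (negbTE n) /=.
  by apply/negP => /andP[/eqP c1v _]; rewrite -c1v c1S in vS.
case: (add_edge ok1 ac1 n1) => ok2 ac2.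
have vS' : v \in v |: S by rewrite !inE eqxx.
have sS : S \subset v |: S by apply/subsetP => x xS; rewrite !inE xS orbT.
split => //.
  apply: ends_cons; last by []; last by rewrite (subsetP sS).
  by apply: ends_cons => //; [apply: ends_sub sS| rewrite (subsetP sS)].
set M := comp (ur L) c1 :|: comp (ur L) c2 :|: [set v].
apply: (Bgen (M := M) b).
- apply: conn_M => //.
  - by move=> a z h; rewrite ur_cons /addrel ur_cons /addrel h.
  - move=> a z; rewrite ur_cons /addrel ur_cons /addrel.
    case/or3P => [/or3P[->//|/andP[/eqP-> /eqP->]|/andP[/eqP-> /eqP->]]|/andP[/eqP-> /eqP->]|/andP[/eqP-> /eqP->]];
      by rewrite !inE connect0 eqxx !orbT.
  - move=> a z; rewrite !inE => /orP[/orP[h|h]|/eqP->] hz.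
    + by rewrite (connect_trans h hz).
    + by rewrite (connect_trans h hz) orbT.
    + by rewrite (cvL _ hz) eqxx !orbT.
  - set L2 := (c1, v) :: L1.
    have sub : subrel (ur L) (ur L2) by move=> p q h; rewrite /L2 /L1 ur_cons /addrel ur_cons /addrel h.
    have csub : subrel (connect (ur L)) (connect (ur L2)) by apply: connect_sub => p q /sub/connect1.
    have e1 : ur L2 c1 v by rewrite /L2 ur_cons /addrel !eqxx orbT.
    have e2 : ur L2 c2 v by rewrite /L2 /L1 ur_cons /addrel ur_cons /addrel !eqxx !orbT.
    have hv : forall a, a \in M -> connect (ur L2) a v.
      move=> a; rewrite !inE => /orP[/orP[h|h]|/eqP->]; last exact: connect0.
        by apply: connect_trans (connect1 e1); apply: csub; rewrite cs.
      by apply: connect_trans (connect1 e2); apply: csub; rewrite cs.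
    move=> a z aM zM; apply: connect_trans (hv _ aM) _.
    by rewrite (sym_connect_sym (@ur_sym _ L2)) hv.
- move=> x y; rewrite !inE => /orP[/orP[h|h]|/eqP->] hxy.
  + by rewrite (connect_trans h hxy).
  + by rewrite (connect_trans h hxy) orbT.
  + by rewrite (cvL _ hxy) eqxx !orbT.
- by move=> x; rewrite !inE => /orP[/eqP->|->]; [rewrite eqxx !orbT|].
- exact: subxx.
have d := comp_disj se n.
have vc : v \notin comp (ur L) c1 :|: comp (ur L) c2.
  by rewrite !inE negb_or (negbTE (niv _ c1S)) (negbTE (niv _ c2S)).
have -> : #|M| = (#|comp (ur L) c1| + #|comp (ur L) c2|).+1.
  by rewrite /M setUC cardsU1 vc card_disjU.
have : #|Rq :&: comp (ur L) c1| + #|Rq :&: comp (ur L) c2| <= #|Rq :&: M|.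
  rewrite -card_disjU; last by rewrite setIACA d setI0.
  by apply: subset_leq_card; rewrite -setIUr setIS // /M subsetUl.
move: (b _ c1S) (b _ c2S) => h1 h2 h3; lia.

Qed.

Lemma acyc_disc {V : finType} (e : rel V) p q :
  symmetric e -> acyc (addrel e p q) -> p != q -> ~~ e p q -> ~~ connect e p q.
Proof.
move=> se ac pq nepq; apply/negP => /connectP[s ps lst]; subst q.
move: pq nepq ac; case: (shortenP ps) => s' ps' u' _.
case: s' ps' u' => [|y s'] /=; first by rewrite eqxx.
case: s' => [|y' s'] /=.
  by rewrite andbT => epy _ _; rewrite epy.
move=> /andP[epy /andP[eyy' ps']] u' _ _ ac.
have hs : 3 <= size [:: p, y, y' & s'] by [].
move: (ac _ hs); rewrite /ucycleb /= u' andbT rcons_path.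
have sub : subrel e (addrel e p (last y' s')) by move=> x z h; rewrite /addrel h.
rewrite (sub _ _ epy) (sub _ _ eyy') (sub_path sub ps') /=.
by rewrite /addrel !eqxx !orbT.
Qed.

Lemma conn_eq {V : finType} (e1 e2 : rel V) :
  subrel e1 (connect e2) -> subrel e2 (connect e1) -> connect e1 =2 connect e2.
Proof.
move=> h1 h2 x y; apply/idP/idP; [exact: connect_sub | exact: connect_sub].
Qed.

Lemma ur_consE {V : eqType} (L : seq (V * V)) p x y :
  ur (p :: L) x y = [|| (x, y) == p, (y, x) == p | ur L x y].
Proof.
rewrite /ur !inE.
by case: ((x, y) == p); case: ((y, x) == p); case: ((x, y) \in L); case: ((y, x) \in L).
Qed.

Lemma OP4 {V : finType} (L : seq (V * V)) (S Rq : {set V}) a z c v :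
  FS ((a, z) :: L) S Rq -> c \in S -> ~~ connect (ur ((a, z) :: L)) c a -> v \notin S ->
  FS ((c, v) :: (a, v) :: (v, z) :: L) (v |: S) Rq.
Proof.
move=> F0 cS nca vS; have F0' := F0; case: F0' => ok0 ac0 ei0 b0.
have /andP[aS zS] := ei0 _ (mem_head _ _).
have ei : ends_in L S by move=> p pL; apply: ei0; rewrite inE pL orbT.
have ok : arcsOK L := arcsOK_tail ok0.
have az : a != z := arcsOK_noloop ok0 (mem_head _ _).
have naz : ~~ ur L a z.
  case/andP: ok0 => /= /andP[n1 _] /andP[n2 _]; rewrite /ur negb_or n1 /=.
  by move: n2; rewrite inE negb_or => /andP[].
have se := @ur_sym _ L.
have ac : acyc (ur L).
  by apply: acyc_sub ac0 => x y h; rewrite ur_consE h !orbT.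
have ncaz : ~~ connect (ur L) a z.
  apply: acyc_disc => //; apply: acyc_eq ac0 => x y; exact: ur_cons.
have iso := ur_iso ei vS.
have iso0 := ur_iso ei0 vS.
have cvL : forall x, connect (ur L) v x -> x = v by move=> x /(iso_connect iso).
have cs := sym_connect_sym se.
have nav : ~~ connect (ur L) a v.
  by apply/negP; rewrite cs => /cvL av; rewrite -av aS in vS.
case: (add_edge ok ac nav) => ok1 ac1.
have nvz : ~~ connect (ur ((a, v) :: L)) v z.
  rewrite (eq_connect (ur_cons L a v)) connect_addM // !inE negb_or.
  rewrite (negbTE ncaz) /=; apply/andP; split.
    by apply/negP => /cvL zv; rewrite -zv zS in vS.
  by apply/negP => /andP[_ /cvL zv]; rewrite -zv zS in vS.
case: (add_edge ok1 ac1 nvz) => ok2 ac2.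
have ceq : connect (ur ((v, z) :: (a, v) :: L)) =2 connect (ur ((a, v) :: (a, z) :: L)).
  apply: conn_eq => x y; rewrite !ur_consE.
  - case/or3P => [/eqP[-> ->]|/eqP[-> ->]|/or3P[/eqP[-> ->]|/eqP[-> ->]|h]].
    + apply: (connect_trans (y := a)); last by apply: connect1; rewrite !ur_consE eqxx /= ?orbT.
      by apply: connect1; rewrite !ur_consE eqxx /= ?orbT.
    + apply: (connect_trans (y := a)); first by apply: connect1; rewrite !ur_consE eqxx /= ?orbT.
      by apply: connect1; rewrite !ur_consE eqxx /= ?orbT.
    + by apply: connect1; rewrite !ur_consE eqxx /= ?orbT.
    + by apply: connect1; rewrite !ur_consE eqxx /= ?orbT.
    + by apply: connect1; rewrite !ur_consE h !orbT.
  - case/or3P => [/eqP[-> ->]|/eqP[-> ->]|/or3P[/eqP[-> ->]|/eqP[-> ->]|h]].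
    + by apply: connect1; rewrite !ur_consE eqxx /= ?orbT.
    + by apply: connect1; rewrite !ur_consE eqxx /= ?orbT.
    + apply: (connect_trans (y := v)); first by apply: connect1; rewrite !ur_consE eqxx /= ?orbT.
      by apply: connect1; rewrite !ur_consE eqxx /= ?orbT.
    + apply: (connect_trans (y := v)); first by apply: connect1; rewrite !ur_consE eqxx /= ?orbT.
      by apply: connect1; rewrite !ur_consE eqxx /= ?orbT.
    + by apply: connect1; rewrite !ur_consE h !orbT.
have ncv : ~~ connect (ur ((v, z) :: (a, v) :: L)) c v.
  rewrite ceq (eq_connect (ur_cons _ a v)) connect_addM; last exact: ur_sym.
  rewrite !inE negb_or; have cs0 := sym_connect_sym (@ur_sym _ ((a, z) :: L)).
  have cv0 : forall x, connect (ur ((a, z) :: L)) v x -> x = v.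
    by move=> x /(iso_connect iso0).
  have ncv0 : ~~ connect (ur ((a, z) :: L)) c v.
    by apply/negP; rewrite cs0 => /cv0 cv; rewrite -cv cS in vS.
  rewrite (negbTE ncv0) /= cs0 (negbTE nca) /=.
  by apply/negP => /andP[/cv0 cv _]; rewrite -cv cS in vS.
case: (add_edge ok2 ac2 ncv) => ok3 ac3.
have F4 := OP3 F0 cS aS nca vS.
case: F4 => _ _ _ b4.
have sS : S \subset v |: S by apply/subsetP => x xS; rewrite !inE xS orbT.
have vS' : v \in v |: S by rewrite !inE eqxx.
have ok3' : arcsOK ((c, v) :: (a, v) :: (v, z) :: L).
  rewrite (arcsOK_perm (_ : perm_eq _ ((c, v) :: (v, z) :: (a, v) :: L))) //.
  by rewrite perm_cons; apply/permPl; exact: (perm_catCA [:: (a, v)] [:: (v, z)] L).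
have urp : ur ((c, v) :: (a, v) :: (v, z) :: L) =2 ur ((c, v) :: (v, z) :: (a, v) :: L).
  by move=> x y; rewrite !ur_consE; case: ((x, y) == (a, v)); case: ((y, x) == (a, v));
     case: ((x, y) == (v, z)); case: ((y, x) == (v, z)); rewrite ?orbT.
split => //.
- by apply: acyc_eq ac3 => x y; rewrite urp.
- apply: ends_cons; [|by rewrite (subsetP sS)|by []].
  apply: ends_cons; [|by rewrite (subsetP sS)|by []].
  by apply: ends_cons; [apply: ends_sub sS|by []|by rewrite (subsetP sS)].
apply: Bnd_eq b4 => x y.
rewrite (eq_connect urp) !(eq_connect (ur_cons _ c v)) !connect_addM; try exact: ur_sym.
have -> : comp (ur ((v, z) :: (a, v) :: L)) c = comp (ur ((a, v) :: (a, z) :: L)) c.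
  by apply/setP => w; rewrite !inE ceq.
have -> : comp (ur ((v, z) :: (a, v) :: L)) v = comp (ur ((a, v) :: (a, z) :: L)) v.
  by apply/setP => w; rewrite !inE ceq.
by rewrite ceq.
Qed.

Lemma mem_zip' {S T : eqType} (s : seq S) (t : seq T) a b :
  (a, b) \in zip s t -> (a \in s) && (b \in t).
Proof.
elim: s t => [|x s IH] [|y t] //=; rewrite inE => /orP[/eqP[-> ->]|/IH/andP[h1 h2]].
  by rewrite !inE !eqxx.
by rewrite !inE h1 h2 !orbT.
Qed.

Lemma sol_arcsP {V : finType} (W : seq (V * seq V)) p :
  reflect (exists2 w, w \in W & p \in warcs w) (p \in sol_arcs W).
Proof. exact: flatten_mapP. Qed.

Lemma in_sol_verts {V : finType} (W : seq (V * seq V)) y :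
  (y \in sol_verts W) = has (fun w => y \in wverts w) W.
Proof. by rewrite inE. Qed.

Lemma sol_vertsP {V : finType} (W : seq (V * seq V)) y :
  reflect (exists2 w, w \in W & y \in wverts w) (y \in sol_verts W).
Proof. rewrite in_sol_verts; exact: hasP. Qed.

Lemma sol_verts_cons {V : finType} (w : V * seq V) W y :
  (y \in sol_verts (w :: W)) = (y \in wverts w) || (y \in sol_verts W).
Proof. by rewrite !in_sol_verts. Qed.

Lemma sol_verts_perm {V : finType} (W1 W2 : seq (V * seq V)) :
  perm_eq W1 W2 -> sol_verts W1 = sol_verts W2.
Proof. by move=> h; apply/setP => y; rewrite !in_sol_verts (perm_has _ h). Qed.

Lemma sol_arcs_perm {V : finType} (W1 W2 : seq (V * seq V)) :
  perm_eq W1 W2 -> perm_eq (sol_arcs W1) (sol_arcs W2).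
Proof. by move=> h; apply: perm_flatten; apply: perm_map. Qed.

Lemma urel_perm {V : finType} (W1 W2 : seq (V * seq V)) :
  perm_eq W1 W2 -> urel W1 =2 urel W2.
Proof. by move=> h; apply: (ur_perm (sol_arcs_perm h)). Qed.

Lemma warcs_sub {V : finType} (W : seq (V * seq V)) w :
  w \in W -> {subset warcs w <= sol_arcs W}.
Proof. by move=> wW p pw; apply/sol_arcsP; exists w. Qed.

Lemma wconn {V : finType} (L : seq (V * V)) x s :
  {subset warcs (x, s) <= L} -> forall y, y \in x :: s -> connect (ur L) x y.
Proof.
elim: s x => [|z s IH] x sub y; first by rewrite inE => /eqP->; rewrite connect0.
rewrite inE => /orP[/eqP->|ys]; first by rewrite connect0.
have xz : ur L x z by rewrite /ur sub // /warcs /= mem_head.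
apply: connect_trans (connect1 xz) _; apply: IH => //.
by move=> p pL; apply: sub; rewrite /warcs /= inE pL orbT.
Qed.

Lemma walk_conn {V : finType} (W : seq (V * seq V)) w y :
  w \in W -> y \in wverts w -> connect (urel W) w.1 y.
Proof. by case: w => x s wW; apply: wconn; apply: warcs_sub. Qed.

Lemma warcs_ends {V : finType} (w : V * seq V) p :
  p \in warcs w -> (p.1 \in wverts w) && (p.2 \in wverts w).
Proof.
case: w p => x s [a b] /mem_zip' /andP[h1 h2] /=; by rewrite h1 /wverts inE h2 orbT.
Qed.

Lemma ends_sol {V : finType} (W : seq (V * seq V)) : ends_in (sol_arcs W) (sol_verts W).
Proof.
move=> p /sol_arcsP[w wW /warcs_ends /andP[h1 h2]].
by apply/andP; split; apply/sol_vertsP; exists w.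
Qed.

Lemma warcs_rcons {V : finType} (x : V) t v :
  warcs (x, rcons t v) = rcons (warcs (x, t)) (last x t, v).
Proof.
rewrite /warcs /=; elim: t x => [|y t IH] x //=; by rewrite IH.
Qed.

Lemma warcs_cat {V : finType} (y : V) t1 s2 :
  warcs (y, t1 ++ s2) = zip (belast y t1) t1 ++ warcs (last y t1, s2).
Proof.
rewrite /warcs /= -cat_cons lastI cat_rcons zip_cat //; by rewrite size_belast.
Qed.

Definition relpair {V : finType} (pr : (V * seq V) * (V * seq V)) : bool :=
  (pr.1.1 == pr.2.1) && subseq pr.1.2 pr.2.2.

Definition PROPS {V : finType} (W Ws : seq (V * seq V)) (Rq : {set V}) :=
  [/\ FS (sol_arcs Ws) (sol_verts Ws) Rq, Rq \subset sol_verts Ws &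
      forall f g, f \in Rq -> g \in Rq -> connect (urel W) f g -> connect (urel Ws) f g].

Definition concl {V : finType} (W : seq (V * seq V)) (Rq : {set V}) :=
  exists Z, [/\ perm_eq (map snd Z) W, all relpair Z & PROPS W (map fst Z) Rq].

Lemma FS_perm {V : finType} (L1 L2 : seq (V * V)) S Rq :
  perm_eq L1 L2 -> FS L1 S Rq -> FS L2 S Rq.
Proof.
move=> h [ok ac ei b]; split.
- by rewrite -(arcsOK_perm h).
- by apply: acyc_eq ac; apply: ur_perm.
- by move=> p; rewrite -(perm_mem h); apply: ei.
- by apply: Bnd_eq b; apply: eq_connect; apply: ur_perm.
Qed.

Lemma PROPS_perm {V : finType} (W Ws1 Ws2 : seq (V * seq V)) Rq :
  perm_eq Ws1 Ws2 -> PROPS W Ws1 Rq -> PROPS W Ws2 Rq.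
Proof.
move=> h [F sub R]; split.
- by rewrite -(sol_verts_perm h); apply: FS_perm F; apply: sol_arcs_perm.
- by rewrite -(sol_verts_perm h).
- by move=> f g fR gR /(R _ _ fR gR); rewrite (eq_connect (urel_perm h)).
Qed.

Lemma PROPS_permW {V : finType} (W1 W2 Ws : seq (V * seq V)) Rq :
  perm_eq W1 W2 -> PROPS W1 Ws Rq -> PROPS W2 Ws Rq.
Proof.
move=> h [F sub R]; split => // f g fR gR; rewrite -(eq_connect (urel_perm h)); exact: R.
Qed.

Lemma concl_perm {V : finType} (W1 W2 : seq (V * seq V)) Rq :
  perm_eq W1 W2 -> concl W1 Rq -> concl W2 Rq.
Proof.
move=> h [Z [p a P]]; exists Z; split => //; first exact: perm_trans p h.
exact: PROPS_permW P.
Qed.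

Lemma relpair_verts {V : finType} (pr : (V * seq V) * (V * seq V)) :
  relpair pr -> {subset wverts pr.1 <= wverts pr.2}.
Proof.
case: pr => [[x t] [x' s]] /andP[/= /eqP-> st] y; rewrite /wverts !inE.
by case/orP => [->|/(mem_subseq st)->]; rewrite ?orbT.
Qed.

Lemma Z_verts {V : finType} (Z : seq ((V * seq V) * (V * seq V))) y :
  all relpair Z -> y \in sol_verts (map fst Z) ->
  exists2 pr, pr \in Z & (y \in wverts pr.1) && (y \in wverts pr.2).
Proof.
move=> /allP a /sol_vertsP[w /mapP[pr prZ ->] yw]; exists pr => //.
by rewrite yw (relpair_verts (a _ prZ)).
Qed.

Lemma Z_verts_sub {V : finType} (Z : seq ((V * seq V) * (V * seq V))) :
  all relpair Z -> sol_verts (map fst Z) \subset sol_verts (map snd Z).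
Proof.
move=> a; apply/subsetP => y /(Z_verts a)[pr prZ /andP[_ h]].
by apply/sol_vertsP; exists pr.2 => //; apply: map_f.
Qed.

Lemma NORM {V : finType} (Z : seq ((V * seq V) * (V * seq V))) w0 Wr :
  perm_eq (map snd Z) (w0 :: Wr) ->
  exists pr Zr, [/\ pr.2 = w0, perm_eq Z (pr :: Zr) & perm_eq (map snd Zr) Wr].
Proof.
move=> h; have : w0 \in map snd Z by rewrite (perm_mem h) mem_head.
case/mapP => pr prZ e; exists pr, (rem pr Z); split => //; first exact: perm_to_rem.
have h2 := perm_map snd (perm_to_rem prZ).
by rewrite -(perm_cons w0) {1}e; apply: perm_trans h; rewrite perm_sym.
Qed.

Lemma BASE {V : finType} (W : seq (V * seq V)) (Rq : {set V}) :
  (forall w, w \in W -> w.2 = [::]) -> (forall w, w \in W -> w.1 \in Rq) ->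
  Rq \subset sol_verts W -> concl W Rq.
Proof.
move=> e0 st sub; exists [seq (w, w) | w <- W].
have mf : map fst [seq (w, w) | w <- W] = W by elim: W {e0 st sub} => //= w W ->.
have ms : map snd [seq (w, w) | w <- W] = W by elim: W {e0 st sub mf} => //= w W ->.
rewrite mf ms; split => //.
  by apply/allP => pr /mapP[w _ ->]; rewrite /relpair /= eqxx subseq_refl.
have a0 : sol_arcs W = [::].
  rewrite /sol_arcs; elim: W e0 {st sub mf ms} => //= w W IH e0.
  rewrite IH; last by move=> w' h; apply: e0; rewrite inE h orbT.
  by case: w e0 => x s e0; move: (e0 (x, s) (mem_head _ _)) => /= ->.
have ur0 : forall x y, ur (sol_arcs W) x y = false by move=> x y; rewrite /ur a0.
split; [|exact: sub|by move=> f g _ _].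
split.
- by rewrite a0.
- move=> c hc; rewrite /ucycleb; case: c hc => // y c _ /=.
  suff : ~~ path (ur (sol_arcs W)) y (rcons c y) by move/negbTE ->.
  by case: c => [|z c] /=; rewrite ur0.
- by rewrite a0.
move=> x xS; rewrite (compU1 (fun y => negbT (ur0 x y))) cards1.
have : x \in Rq.
  case/sol_vertsP: xS => w wW; rewrite /wverts (e0 w wW) inE => /eqP->; exact: st.
move=> xR; have -> : Rq :&: [set x] = [set x].
  by apply/setP => y; rewrite !inE; case: eqP => [->|_]; rewrite ?xR ?andbF.
by rewrite cards1.
Qed.

Lemma ins_subseq {T : eqType} (s1 s2 : seq T) v :
  subseq s1 s2 -> v \in s2 -> v \notin s1 ->
  exists a b, s1 = a ++ b /\ subseq (a ++ v :: b) s2.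
Proof.
elim: s2 s1 => [|y s2 IH] s1 //=.
case: (eqVneq y v) => [->|yv] sub; rewrite inE => vs vs1.
  exists [::], s1; split => //=; rewrite eqxx.
  move: sub vs1; case: s1 => [|z s1] /=; first by rewrite sub0seq.
  rewrite inE negb_or => sub /andP[vz _].
  by rewrite eq_sym (negbTE vz) in sub.
move: vs; rewrite eq_sym (negbTE yv) /= => vs.
case: s1 sub vs1 => [|z s1] sub vs1.
  by exists [::], [::]; split => //=; rewrite eq_sym (negbTE yv) sub1seq.
move: sub vs1; rewrite /= inE negb_or => sub /andP[vz vs1].
case: (eqVneq z y) sub => [<-|zy] sub.
  case: (IH s1 sub vs vs1) => a [b [-> h]].
  by exists (z :: a), b; split => //=; rewrite eqxx.
case: (IH (z :: s1) sub vs); first by rewrite inE negb_or vz.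
move=> a [b [e h]]; exists a, b; split => //.
case: a e h => [|c a] /= e h; first by rewrite eq_sym (negbTE yv).
case: eqP => // _; exact: subseq_trans (subseq_cons _ _) h.
Qed.

Lemma arcs_rcons {V : finType} (x : V) t v R :
  perm_eq (sol_arcs ((x, rcons t v) :: R)) ((last x t, v) :: sol_arcs ((x, t) :: R)).
Proof.
rewrite /sol_arcs /= warcs_rcons cat_rcons; apply/permPl.
exact: (perm_catCA _ [:: _] _).
Qed.

Lemma verts_rcons {V : finType} (x : V) t v R :
  sol_verts ((x, rcons t v) :: R) = v |: sol_verts ((x, t) :: R).
Proof.
apply/setP => y; rewrite in_setU1 !sol_verts_cons /wverts !inE mem_rcons inE.
by case: (y == v); case: (y == x); case: (y \in t); rewrite ?orbT.
Qed.

Lemma verts_ins {V : finType} (x : V) t1 t2 v R :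
  sol_verts ((x, t1 ++ v :: t2) :: R) = v |: sol_verts ((x, t1 ++ t2) :: R).
Proof.
apply/setP => y; rewrite in_setU1 !sol_verts_cons /wverts !inE !mem_cat inE.
by case: (y == v); case: (y == x); case: (y \in t1); case: (y \in t2); rewrite ?orbT.
Qed.

Lemma urel_sym {V : finType} (W : seq (V * seq V)) : connect_sym (urel W).
Proof. exact: sym_connect_sym (@ur_sym _ _). Qed.

Lemma R5_case2 {V : finType} (W0 W' Ws : seq (V * seq V)) (u v x xk : V) (Rq : {set V}) :
  (forall f g, connect (urel W0) f g = [|| connect (urel W') f g,
     connect (urel W') f u && connect (urel W') v g | connect (urel W') f v && connect (urel W') u g]) ->
  connect (urel W') u x -> connect (urel W') v xk -> x \in Rq -> xk \in Rq ->
  (forall f g, f \in Rq -> g \in Rq -> connect (urel W') f g -> connect (urel Ws) f g) ->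
  connect (urel Ws) x xk ->
  forall f g, f \in Rq -> g \in Rq -> connect (urel W0) f g -> connect (urel Ws) f g.
Proof.
move=> F4 ux vxk xR xkR R5 cx f g fR gR; rewrite F4.
have s1 := @urel_sym _ W'; have s2 := @urel_sym _ Ws.
case/or3P => [/R5 -> //|/andP[fu vg]|/andP[fv ug]].
- have fx : connect (urel Ws) f x by apply: R5 => //; exact: connect_trans fu ux.
  have xkg : connect (urel Ws) xk g by apply: R5 => //; rewrite s1 in vxk; exact: connect_trans vxk vg.
  exact: connect_trans (connect_trans fx cx) xkg.
- have fxk : connect (urel Ws) f xk by apply: R5 => //; exact: connect_trans fv vxk.
  have xg : connect (urel Ws) x g by apply: R5 => //; rewrite s1 in ux; exact: connect_trans ux ug.
  by apply: connect_trans (connect_trans fxk _) xg; rewrite s2.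
Qed.

Lemma R5_replace {V : finType} (W0 Ws : seq (V * seq V)) v x (Rq : {set V}) :
  (forall f g, f \in Rq -> g \in Rq -> f != v -> g != v ->
     connect (urel W0) f g -> connect (urel Ws) f g) ->
  connect (urel W0) v x -> connect (urel Ws) v x -> x \in Rq -> x != v ->
  forall f g, f \in Rq -> g \in Rq -> connect (urel W0) f g -> connect (urel Ws) f g.
Proof.
move=> R5 c0 cs xR xv.
have s0 := @urel_sym _ W0; have s1 := @urel_sym _ Ws.
have key : forall f, f \in Rq -> exists2 f', (f' \in Rq) && (f' != v) &
    connect (urel W0) f f' && connect (urel Ws) f f'.
  move=> f fR; case: (eqVneq f v) => [->|fv].
    by exists x; rewrite ?xR ?xv ?c0 ?cs.
  by exists f; rewrite ?fR ?fv ?connect0.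
move=> f g fR gR fg.
case: (key f fR) => f' /andP[f'R f'v] /andP[ff'0 ff's].
case: (key g gR) => g' /andP[g'R g'v] /andP[gg'0 gg's].
have : connect (urel W0) f' g'.
  by apply: connect_trans (connect_trans _ fg) gg'0; rewrite s0.
move/(R5 _ _ f'R g'R f'v g'v) => h.
by apply: connect_trans (connect_trans ff's h) _; rewrite s1.
Qed.

Lemma setU1_in {T : finType} (x : T) (A : {set T}) : x \in A -> x |: A = A.
Proof. by move=> xA; apply/setP => y; rewrite in_setU1; case: eqP => // ->; rewrite xA. Qed.

Lemma sol_arcs_cons {V : finType} (w : V * seq V) R : sol_arcs (w :: R) = warcs w ++ sol_arcs R.
Proof. by []. Qed.

Lemma conn_mono {V : finType} (W1 W2 : seq (V * seq V)) :
  (forall w1, w1 \in W1 -> exists2 w2, w2 \in W2 & {subset wverts w1 <= wverts w2}) ->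
  subrel (connect (urel W1)) (connect (urel W2)).
Proof.
move=> h; apply: connect_sub => p q.
have key : forall a b, (a, b) \in sol_arcs W1 -> connect (urel W2) a b.
  move=> a b /sol_arcsP[w1 w1W /warcs_ends /andP[/= pa pb]].
  case: (h _ w1W) => w2 w2W sub.
  apply: (connect_trans (y := w2.1)); last exact: walk_conn (sub _ pb).
  by rewrite urel_sym; exact: walk_conn (sub _ pa).
by case/orP => /key //; rewrite urel_sym.
Qed.

Lemma conn_drop {V : finType} (W0 W' : seq (V * seq V)) u v f g :
  (forall f g, connect (urel W0) f g = [|| connect (urel W') f g,
     connect (urel W') f u && connect (urel W') v g | connect (urel W') f v && connect (urel W') u g]) ->
  v \notin sol_verts W' -> f != v -> g != v -> connect (urel W0) f g -> connect (urel W') f g.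
Proof.
move=> F4 vS fv gv; rewrite F4.
have iso := ur_iso (@ends_sol _ W') vS.
case/or3P => [//|/andP[_ /(iso_connect iso) gv']|/andP[fv' _]].
  by rewrite gv' eqxx in gv.
by move: fv'; rewrite urel_sym => /(iso_connect iso) fv'; rewrite fv' eqxx in fv.
Qed.

Lemma relpairE {V : finType} (x' x : V) t s :
  relpair ((x', t), (x, s)) -> x' = x /\ subseq t s.
Proof. by case/andP => /= /eqP -> ->. Qed.

Lemma warcs_ins {V : finType} (y : V) t1 v z t2 :
  warcs (y, t1 ++ v :: z :: t2) =
  zip (belast y t1) t1 ++ (last y t1, v) :: (v, z) :: warcs (z, t2).
Proof. by rewrite warcs_cat. Qed.

Lemma warcs_ins0 {V : finType} (y : V) t1 z t2 :
  warcs (y, t1 ++ z :: t2) = zip (belast y t1) t1 ++ (last y t1, z) :: warcs (z, t2).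
Proof. by rewrite warcs_cat. Qed.

Lemma mono2 {V : finType} (w1 w1' w2 w2' : V * seq V) R :
  {subset wverts w1 <= wverts w1'} -> {subset wverts w2 <= wverts w2'} ->
  subrel (connect (urel (w1 :: w2 :: R))) (connect (urel (w1' :: w2' :: R))).
Proof.
move=> h1 h2; apply: conn_mono => w; rewrite !inE => /or3P[/eqP->|/eqP->|wR].
- by exists w1' => //; rewrite mem_head.
- by exists w2' => //; rewrite !inE eqxx orbT.
- by exists w => //; rewrite !inE wR !orbT.
Qed.

Lemma mono1 {V : finType} (w1 w1' : V * seq V) R :
  {subset wverts w1 <= wverts w1'} ->
  subrel (connect (urel (w1 :: R))) (connect (urel (w1' :: R))).
Proof.
move=> h1; apply: conn_mono => w; rewrite !inE => /orP[/eqP->|wR].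
- by exists w1' => //; rewrite mem_head.
- by exists w => //; rewrite !inE wR !orbT.
Qed.

Lemma sub_rcons {V : finType} (x : V) t v : {subset wverts (x, t) <= wverts (x, rcons t v)}.
Proof. by move=> y; rewrite /wverts !inE mem_rcons inE => /orP[->|->]; rewrite ?orbT. Qed.

Lemma verts2r {V : finType} (x y v : V) t t' R :
  sol_verts ((x, rcons t v) :: (y, rcons t' v) :: R) = v |: sol_verts ((x, t) :: (y, t') :: R).
Proof.
apply/setP => z; rewrite in_setU1 !sol_verts_cons /wverts !inE !mem_rcons !inE.
by case: (z == v); case: (z == x); case: (z == y); case: (z \in t); case: (z \in t'); rewrite ?orbT.
Qed.

Lemma verts2i {V : finType} (x y v : V) t t1 t2 R :
  sol_verts ((x, rcons t v) :: (y, t1 ++ v :: t2) :: R) = v |: sol_verts ((x, t) :: (y, t1 ++ t2) :: R).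
Proof.
apply/setP => z; rewrite in_setU1 !sol_verts_cons /wverts !inE mem_rcons !mem_cat !inE.
by case: (z == v); case: (z == x); case: (z == y); case: (z \in t); case: (z \in t1);
  case: (z \in t2); rewrite ?orbT.
Qed.

Lemma arcs2r {V : finType} (x y v : V) t t' R :
  perm_eq ((last x t, v) :: (last y t', v) :: sol_arcs ((x, t) :: (y, t') :: R))
          (sol_arcs ((x, rcons t v) :: (y, rcons t' v) :: R)).
Proof.
apply/permP => P; rewrite !sol_arcs_cons !warcs_rcons -!cats1 !count_cat /= !count_cat; lia.
Qed.

Lemma arcs2i_old {V : finType} (x y z : V) t t1 t2 R :
  perm_eq (sol_arcs ((x, t) :: (y, t1 ++ z :: t2) :: R))
    ((last y t1, z) :: (warcs (x, t) ++ (zip (belast y t1) t1 ++ warcs (z, t2)) ++ sol_arcs R)).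
Proof.
apply/permP => P; rewrite !sol_arcs_cons warcs_ins0 !count_cat /= !count_cat; lia.
Qed.

Lemma arcs2i_new {V : finType} (x y z v : V) t t1 t2 R :
  perm_eq ((last x t, v) :: (last y t1, v) :: (v, z) ::
      (warcs (x, t) ++ (zip (belast y t1) t1 ++ warcs (z, t2)) ++ sol_arcs R))
    (sol_arcs ((x, rcons t v) :: (y, t1 ++ v :: z :: t2) :: R)).
Proof.
apply/permP => P; rewrite !sol_arcs_cons warcs_ins warcs_rcons -cats1 !count_cat /= !count_cat /=; lia.
Qed.

Lemma STEP {V : finType} (x : V) s v (Wr : seq (V * seq V)) (Rq : {set V}) :
  (forall Rq' : {set V}, (forall w, w \in (x, s) :: Wr -> w.1 \in Rq') ->
     Rq' \subset sol_verts ((x, s) :: Wr) -> concl ((x, s) :: Wr) Rq') ->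
  (forall w, w \in (x, rcons s v) :: Wr -> w.1 \in Rq) ->
  Rq \subset sol_verts ((x, rcons s v) :: Wr) ->
  concl ((x, rcons s v) :: Wr) Rq.
Proof.
move=> IH st sub.
set W0 := (x, rcons s v) :: Wr; set W' := (x, s) :: Wr; set u := last x s.
have V0 : sol_verts W0 = v |: sol_verts W' := verts_rcons x s v Wr.
have A0 : perm_eq (sol_arcs W0) ((u, v) :: sol_arcs W') := arcs_rcons x s v Wr.
have F4 : forall f g, connect (urel W0) f g = [|| connect (urel W') f g,
     connect (urel W') f u && connect (urel W') v g | connect (urel W') f v && connect (urel W') u g].
  move=> f g; rewrite (eq_connect (ur_perm A0)) (eq_connect (ur_cons _ u v)) connect_add //.
  exact: ur_sym.
have st' : forall w, w \in W' -> w.1 \in Rq.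
  move=> w; rewrite inE => /orP[/eqP->|wW]; first exact: (st _ (mem_head _ _)).
  by apply: st; rewrite inE wW orbT.
have uW' : connect (urel W') u x.
  by rewrite urel_sym; apply: (walk_conn (w := (x, s))); [exact: mem_head|exact: mem_last].
have xR : x \in Rq := st _ (mem_head _ _).
have xW' : x \in sol_verts W' by apply/sol_vertsP; exists (x, s); rewrite ?mem_head.
have vW0 : connect (urel W0) v x.
  by rewrite urel_sym; apply: (walk_conn (w := (x, rcons s v))); rewrite ?mem_head // /wverts inE mem_rcons mem_head orbT.
have pW0 : forall Zr, perm_eq (map snd Zr) Wr ->
    perm_eq ((x, rcons s v) :: map snd Zr) W0 by move=> Zr h; rewrite /W0 perm_cons.
have vWsH : forall t R, connect (urel ((x, rcons t v) :: R)) v x.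
  move=> t R; rewrite urel_sym; apply: (walk_conn (w := (x, rcons t v))); first exact: mem_head.
  by rewrite /wverts inE mem_rcons mem_head orbT.
case: (boolP (v \in sol_verts W')) => vW'.
  have sub1 : Rq \subset sol_verts W' by rewrite -(setU1_in vW') -V0.
  case: (IH _ st' sub1) => Z' [pZ aZ PZ].
  case: (NORM pZ) => [[[x' t] w0]] [Zr [/= e0 pZZ pZr]]; subst w0.
  have aZs : all relpair (((x', t), (x, s)) :: Zr) by rewrite -(perm_all _ pZZ).
  move: (aZs) => /= /andP[/relpairE[ex' ts] aZr]; subst x'.
  have PWs' : PROPS W' ((x, t) :: map fst Zr) Rq.
    by apply: PROPS_perm PZ; exact: (perm_map fst pZZ).
  case: PWs' => FS' subR' R5'.
  have pWs : perm_eq ((x, s) :: map snd Zr) W' by rewrite /W' perm_cons.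
  have eS : last x t \in sol_verts ((x, t) :: map fst Zr).
    by apply/sol_vertsP; exists (x, t); [exact: mem_head|exact: mem_last].
  have ex : connect (urel ((x, t) :: map fst Zr)) (last x t) x.
    by rewrite urel_sym; apply: (walk_conn (w := (x, t))); [exact: mem_head|exact: mem_last].
  case/sol_vertsP: (vW') => wk wkW' vwk.
  have xkR : wk.1 \in Rq := st' _ wkW'.
  have vxk : connect (urel W') v wk.1 by rewrite urel_sym; exact: walk_conn.
  case: (boolP (connect (urel ((x, t) :: map fst Zr)) x wk.1)) => cx.
    exists (((x, t), (x, rcons s v)) :: Zr); split.
    - by rewrite /= pW0.
    - by rewrite /= aZr andbT /relpair /= eqxx (subseq_trans ts (subseq_rcons _ _)).
    split => //=; exact: (R5_case2 F4 uW' vxk xR xkR R5' cx).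
  case: (boolP (v \in sol_verts ((x, t) :: map fst Zr))) => vWs.
    have [pr2 pr2Z /andP[v1 v2]] := Z_verts (Z := ((x, t), (x, s)) :: Zr) aZs vWs.
    have rp2 : relpair pr2 by move/allP: aZs; apply.
    have pr2W : pr2.2 \in W'.
      by rewrite -(perm_mem pWs); apply: (map_f snd pr2Z).
    have e12 : pr2.1.1 = pr2.2.1 by case/andP: rp2 => /eqP.
    have y2R : pr2.2.1 \in Rq := st' _ pr2W.
    have vy2 : connect (urel ((x, t) :: map fst Zr)) v pr2.2.1.
      rewrite urel_sym -e12; apply: walk_conn v1; exact: (map_f fst pr2Z).
    have vy2' : connect (urel W') v pr2.2.1 by rewrite urel_sym; exact: walk_conn.
    have xky2 : connect (urel ((x, t) :: map fst Zr)) wk.1 pr2.2.1.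
      apply: R5' => //; apply: connect_trans vy2'; by rewrite urel_sym.
    have vxk' : connect (urel ((x, t) :: map fst Zr)) v wk.1.
      by apply: connect_trans vy2 _; rewrite urel_sym.
    have ncon : ~~ connect (urel ((x, t) :: map fst Zr)) (last x t) v.
      apply: contra cx => h; apply: connect_trans vxk'.
      by apply: connect_trans h; rewrite urel_sym.
    exists (((x, rcons t v), (x, rcons s v)) :: Zr); split.
    - by rewrite /= pW0.
    - by rewrite /= aZr andbT /relpair /= eqxx -!cats1 cat_subseq // subseq_refl.
    split => /=.
    - rewrite verts_rcons setU1_in //.
      apply: (@FS_perm _ ((last x t, v) :: sol_arcs ((x, t) :: map fst Zr))).
        by rewrite perm_sym arcs_rcons.
      exact: OP2 FS' eS vWs ncon.
    - by rewrite verts_rcons setU1_in.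
    apply: (R5_case2 F4 uW' vxk xR xkR).
      move=> f g fR gR /(R5' _ _ fR gR).
      exact: (@mono1 _ (x, t) (x, rcons t v) (map fst Zr) (@sub_rcons _ x t v) f g).
    apply: connect_trans (_ : connect _ x v) _.
      by rewrite urel_sym; apply: vWsH.
    exact: (@mono1 _ (x, t) (x, rcons t v) (map fst Zr) (@sub_rcons _ x t v) v wk.1).
  have vR : v \notin Rq by apply: contra vWs => /(subsetP subR').
  have wkWr : wk \in Wr.
    move: wkW'; rewrite inE => /orP[/eqP wkx|//].
    by move: cx; rewrite wkx connect0.
  have : wk \in map snd Zr by rewrite (perm_mem pZr).
  case/mapP => [[[xk' tk] [xk sk]]] pr2Z /= ewk; subst wk.
  move/allP: (aZr) => /(_ _ pr2Z) /relpairE[exk tksk]; subst xk'.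
  set Zr2 := rem ((xk, tk), (xk, sk)) Zr.
  have pZr2 : perm_eq Zr (((xk, tk), (xk, sk)) :: Zr2) by apply: perm_to_rem.
  have pWs'' : perm_eq ((x, t) :: map fst Zr) ((x, t) :: (xk, tk) :: map fst Zr2).
    by rewrite perm_cons; exact: (perm_map fst pZr2).
  have pSnd : perm_eq ((xk, sk) :: map snd Zr2) Wr.
    by apply: perm_trans pZr; rewrite perm_sym; exact: (perm_map snd pZr2).
  have PW'' : PROPS W' ((x, t) :: (xk, tk) :: map fst Zr2) Rq.
    by apply: (PROPS_perm pWs''); split.
  case: PW'' => FS'' subR'' R5''.
  have sv'' := sol_verts_perm pWs''.
  have vS'' : v \notin sol_verts ((x, t) :: (xk, tk) :: map fst Zr2) by rewrite -sv''.
  have cx'' : ~~ connect (urel ((x, t) :: (xk, tk) :: map fst Zr2)) x xk.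
    by rewrite -(eq_connect (urel_perm pWs'')).
  have ex'' : connect (urel ((x, t) :: (xk, tk) :: map fst Zr2)) (last x t) x.
    by rewrite urel_sym; apply: (walk_conn (w := (x, t))); [exact: mem_head|exact: mem_last].
  have eS'' : last x t \in sol_verts ((x, t) :: (xk, tk) :: map fst Zr2) by rewrite -sv''.
  have xkS : xk \in sol_verts ((x, t) :: (xk, tk) :: map fst Zr2).
    by apply/sol_vertsP; exists (xk, tk); rewrite ?inE ?eqxx ?orbT.
  have vxk2 : v != xk by apply: contraNneq vS'' => ->.
  have vsk : v \in sk by move: vwk; rewrite /wverts inE (negbTE vxk2).
  have vtk : v \notin tk.
    apply: contra vS'' => h; apply/sol_vertsP; exists (xk, tk); rewrite ?inE ?eqxx ?orbT //.
    by rewrite /wverts ?inE h orbT.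
  case: (ins_subseq tksk vsk vtk) => t1 [t2 [etk st12]]; subst tk.
  have xvW : forall R, connect (urel ((x, rcons t v) :: R)) x v.
    move=> R; apply: (walk_conn (w := (x, rcons t v))); first exact: mem_head.
    by rewrite /wverts inE mem_rcons mem_head orbT.
  have pW0' : perm_eq ((x, rcons s v) :: (xk, sk) :: map snd Zr2) W0 by rewrite /W0 perm_cons.
  have [e2|[z [t3 e2]]] : t2 = [::] \/ exists z t3, t2 = z :: t3.
    by case: (t2) => [|z t3]; [left|right; exists z, t3].
    rewrite e2 cats0 in st12 FS'' subR'' R5'' sv'' vS'' cx'' ex'' eS'' xkS.
    have ekS : last xk t1 \in sol_verts ((x, t) :: (xk, t1) :: map fst Zr2).
      by apply/sol_vertsP; exists (xk, t1); [rewrite !inE eqxx orbT|exact: mem_last].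
    have ncon : ~~ connect (urel ((x, t) :: (xk, t1) :: map fst Zr2)) (last x t) (last xk t1).
      apply: contra cx'' => h; apply: connect_trans (_ : connect _ x (last x t)) _.
        by rewrite urel_sym.
      apply: connect_trans h _; rewrite urel_sym.
      by apply: (walk_conn (w := (xk, t1))); [rewrite !inE eqxx orbT|exact: mem_last].
    exists [:: ((x, rcons t v), (x, rcons s v)), ((xk, rcons t1 v), (xk, sk)) & Zr2]; split.
    - by rewrite /=.
    - rewrite /= andbA; apply/andP; split; last first.
        by move/allP: aZr => h; apply/allP => q qZ; apply: h; apply: mem_rem qZ.
      rewrite /relpair /= !eqxx -!cats1 cat_subseq ?subseq_refl //=.
    split => /=.
    - rewrite verts2r; apply: FS_perm (arcs2r _ _ _ _ _ _) _.
      exact: OP3 FS'' eS'' ekS ncon vS''.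
    - rewrite verts2r; apply/subsetP => q qR; rewrite in_setU1 (subsetP subR'') ?orbT //.
    apply: (R5_case2 F4 uW' vxk xR xkR).
      move=> f g fR gR /(R5'' _ _ fR gR).
      by apply: mono2; apply: sub_rcons.
    apply: connect_trans (xvW _) _.
    rewrite urel_sym; apply: (walk_conn (w := (xk, rcons t1 v))); first by rewrite !inE eqxx orbT.
    by rewrite /wverts inE mem_rcons mem_head orbT.
  rewrite e2 in st12 FS'' subR'' R5'' sv'' vS'' cx'' ex'' eS'' xkS.
  have aS : last xk t1 \in sol_verts ((x, t) :: (xk, t1 ++ z :: t3) :: map fst Zr2).
    apply/sol_vertsP; exists (xk, t1 ++ z :: t3); first by rewrite !inE eqxx orbT.
    by rewrite /wverts -cat_cons mem_cat mem_last.
  have nca : ~~ connect (urel ((x, t) :: (xk, t1 ++ z :: t3) :: map fst Zr2)) (last x t) (last xk t1).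
    apply: contra cx'' => h; apply: connect_trans (_ : connect _ x (last x t)) _.
      by rewrite urel_sym.
    apply: connect_trans h _; rewrite urel_sym.
    apply: (walk_conn (w := (xk, t1 ++ z :: t3))); first by rewrite !inE eqxx orbT.
    by rewrite /wverts -cat_cons mem_cat mem_last.
  exists [:: ((x, rcons t v), (x, rcons s v)), ((xk, t1 ++ v :: z :: t3), (xk, sk)) & Zr2]; split.
  - by rewrite /=.
  - rewrite /= andbA; apply/andP; split; last first.
      by move/allP: aZr => h; apply/allP => q qZ; apply: h; apply: mem_rem qZ.
    by rewrite /relpair /= !eqxx st12 -!cats1 cat_subseq ?subseq_refl.
  split => /=.
  - rewrite verts2i; apply: FS_perm (arcs2i_new _ _ _ _ _ _ _ _) _.
    apply: OP4 => //.
      by apply: FS_perm FS''; exact: arcs2i_old.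
    by rewrite -(eq_connect (ur_perm (arcs2i_old _ _ _ _ _ _ _))).
  - rewrite verts2i; apply/subsetP => q qR; rewrite in_setU1 (subsetP subR'') ?orbT //.
  apply: (R5_case2 F4 uW' vxk xR xkR).
    move=> f g fR gR /(R5'' _ _ fR gR).
    apply: mono2; first exact: sub_rcons.
    move=> q; rewrite /wverts !inE !mem_cat !inE.
    by case: (q == xk); case: (q \in t1); case: (q == z); case: (q \in t3); rewrite ?orbT.
  apply: connect_trans (xvW _) _.
  rewrite urel_sym; apply: (walk_conn (w := (xk, t1 ++ v :: z :: t3))); first by rewrite !inE eqxx orbT.
  by rewrite /wverts !inE !mem_cat !inE eqxx !orbT.
have xv : x != v by apply: contraNneq vW' => <-.
have hsW : forall t Zr, perm_eq (map snd Zr) Wr ->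
    all relpair (((x, t), (x, s)) :: Zr) ->
    sol_verts ((x, t) :: map fst Zr) \subset sol_verts W'.
  move=> t Zr pZr aZs; have := Z_verts_sub aZs.
  by rewrite /= (sol_verts_perm (_ : perm_eq ((x, s) :: map snd Zr) W')) // /W' perm_cons.
case: (boolP (v \in Rq)) => vR.
  have st1 : forall w, w \in W' -> w.1 \in Rq :\ v.
    move=> w wW; rewrite !inE (st' _ wW) andbT; apply: contraNneq vW' => <-.
    by apply/sol_vertsP; exists w => //; exact: mem_head.
  have sub1 : Rq :\ v \subset sol_verts W'.
    apply/subsetP => y; rewrite in_setD1 => /andP[yv yR]; move: (subsetP sub _ yR).
    by rewrite V0 in_setU1 (negbTE yv).
  case: (IH _ st1 sub1) => Z' [pZ aZ PZ].
  case: (NORM pZ) => [[[x' t] w0]] [Zr [/= e0 pZZ pZr]]; subst w0.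
  have aZs : all relpair (((x', t), (x, s)) :: Zr) by rewrite -(perm_all _ pZZ).
  move: (aZs) => /= /andP[/relpairE[ex' ts] aZr]; subst x'.
  have PWs' : PROPS W' ((x, t) :: map fst Zr) (Rq :\ v).
    by apply: PROPS_perm PZ; exact: (perm_map fst pZZ).
  case: PWs' => FS' subR' R5'.
  have vWs' : v \notin sol_verts ((x, t) :: map fst Zr).
    by apply: contra vW' => h; apply: (subsetP (hsW _ _ pZr aZs)).
  have eS : last x t \in sol_verts ((x, t) :: map fst Zr).
    by apply/sol_vertsP; exists (x, t); [exact: mem_head|exact: mem_last].
  exists (((x, rcons t v), (x, rcons s v)) :: Zr); split.
  - by rewrite /= pW0.
  - by rewrite /= aZr andbT /relpair /= eqxx -!cats1 cat_subseq // subseq_refl.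
  split => /=.
  - rewrite verts_rcons; apply: (@FS_perm _ ((last x t, v) :: sol_arcs ((x, t) :: map fst Zr))).
      by rewrite perm_sym arcs_rcons.
    by have := OP1 FS' eS vWs'; rewrite setD1K.
  - rewrite verts_rcons; apply/subsetP => y yR; rewrite in_setU1; case: eqP => //= /eqP yv.
    by apply: (subsetP subR'); rewrite !inE yR yv.
  apply: (R5_replace (v := v) (x := x)) => //.
  move=> f g fR gR fv gv /(conn_drop F4 vW' fv gv) h.
  apply: (@mono1 _ (x, t) (x, rcons t v) (map fst Zr) (@sub_rcons _ x t v) f g).
  by apply: R5' => //; rewrite !inE ?fv ?gv ?fR ?gR.
have sub1 : Rq \subset sol_verts W'.
  apply/subsetP => y yR; move: (subsetP sub _ yR); rewrite V0 in_setU1.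
  by case: eqP => // yv; rewrite -yv yR in vR.
case: (IH _ st' sub1) => Z' [pZ aZ PZ].
case: (NORM pZ) => [[[x' t] w0]] [Zr [/= e0 pZZ pZr]]; subst w0.
have aZs : all relpair (((x', t), (x, s)) :: Zr) by rewrite -(perm_all _ pZZ).
move: (aZs) => /= /andP[/relpairE[ex' ts] aZr]; subst x'.
have PWs' : PROPS W' ((x, t) :: map fst Zr) Rq.
  by apply: PROPS_perm PZ; exact: (perm_map fst pZZ).
case: PWs' => FS' subR' R5'.
exists (((x, t), (x, rcons s v)) :: Zr); split.
- by rewrite /= pW0.
- by rewrite /= aZr andbT /relpair /= eqxx (subseq_trans ts (subseq_rcons _ _)).
split => //= f g fR gR.
have fv : f != v by apply: contraNneq vR => <-.
have gv : g != v by apply: contraNneq vR => <-.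
by move/(conn_drop F4 vW' fv gv); apply: R5'.
Qed.

Definition msr {V : finType} (W : seq (V * seq V)) := sumn (map (fun w => size w.2) W).

Lemma size_le_msr {V : finType} (W : seq (V * seq V)) w : w \in W -> size w.2 <= msr W.
Proof.
rewrite /msr; elim: W => [|w' W IH] //=; rewrite inE => /orP[/eqP->|/IH h].
  exact: leq_addr.
exact: leq_trans h (leq_addl _ _).
Qed.

Lemma ML {V : finType} n : forall (W : seq (V * seq V)) (Rq : {set V}),
  msr W <= n -> (forall w, w \in W -> w.1 \in Rq) -> Rq \subset sol_verts W -> concl W Rq.
Proof.
elim: n => [|n IH] W Rq hm st sub.
  apply: BASE => // w wW; apply/eqP; rewrite -size_eq0 -leqn0.
  exact: leq_trans (size_le_msr wW) hm.
case: (boolP (has (fun w => w.2 != [::]) W)) => [/hasP[w wW wne]|hn]; last first.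
  apply: BASE => // w wW; apply/eqP; move: hn => /hasPn /(_ w wW); by rewrite negbK.
have pW := perm_to_rem wW.
case: w wW wne pW => x s0 wW /= wne pW.
case/lastP: s0 wW wne pW => [//|s v] wW _ pW.
set Wr := rem (x, rcons s v) W in pW.
apply: (@concl_perm _ ((x, rcons s v) :: Wr)); first by rewrite perm_sym.
have mW : msr W = (size s).+1 + msr Wr.
  by rewrite /msr (perm_sumn (perm_map _ pW)) /= size_rcons.
apply: STEP.
- move=> Rq' st' sub'; apply: IH => //.
  by rewrite /msr /= -/(msr Wr); move: hm; rewrite mW addSn ltnS.
- by move=> w; rewrite -(perm_mem pW); apply: st.
- by rewrite -(sol_verts_perm pW).
Qed.

Lemma path_tc {V : finType} (A : rel V) x t :
  path (connect A) x t -> (forall p, p \in warcs (x, t) -> p.1 != p.2) -> path (tc A) x t.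
Proof.
elim: t x => [|y t IH] x //= /andP[cxy pt] h.
have xy : x != y by apply: (h (x, y)); rewrite /warcs /= mem_head.
rewrite /tc xy cxy /=; apply: IH => // p pw; apply: h.
by rewrite /warcs /= inE pw orbT.
Qed.

Lemma walk_tc {V : finType} (A : rel V) x s t :
  path A x s -> subseq t s -> (forall p, p \in warcs (x, t) -> p.1 != p.2) ->
  path (tc A) x t.
Proof.
move=> ps st h; apply: path_tc h.
have ps' : sorted (connect A) (x :: s).
  by rewrite /=; apply: sub_path ps => a b; exact: connect1.
have : subseq (x :: t) (x :: s) by rewrite /= eqxx.
move/subseq_sorted => /(_ _ (@connect_trans _ A)) /(_ ps') //.
Qed.

Lemma expand {V : finType} (A : rel V) x t :
  path (tc A) x t -> exists s, path A x s /\ {subset x :: t <= x :: s}.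
Proof.
elim: t x => [|y t IH] x /=; first by move=> _; exists [::]; split.
case/andP => /andP[_ /connectP[p pp ep]] /IH[s' [ps' sub']].
exists (p ++ s'); split; first by rewrite cat_path pp -ep ps'.
move=> z; rewrite inE => /orP[/eqP->|]; first exact: mem_head.
move/sub'; rewrite inE => /orP[/eqP->|zs'].
  by rewrite ep -cat_cons mem_cat mem_last.
by rewrite inE mem_cat zs' !orbT.
Qed.

Lemma expand_all {V : finType} (A : rel V) (Ws : seq (V * seq V)) :
  all (walk_ok (tc A)) Ws ->
  exists W : seq (V * seq V), [/\ map fst W = map fst Ws, all (walk_ok A) W &
     forall ws, ws \in Ws -> exists2 w, w \in W & {subset wverts ws <= wverts w}].
Proof.
elim: Ws => [|[x t] Ws IH] /=; first by move=> _; exists [::].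
case/andP => /expand[s [ps sub]] /IH[W [e a h]].
exists ((x, s) :: W); split => /=; first by rewrite e.
  by rewrite a andbT.
move=> ws; rewrite inE => /orP[/eqP->|wsW].
  by exists (x, s); [exact: mem_head|].
case: (h ws wsW) => w wW sw; exists w => //; by rewrite inE wW orbT.
Qed.

Theorem lemma2 (V : finType) (A : rel V) (F : V -> bool) (B : V -> nat)
    (Hconn : uconnected A)
    (Hrestr : forall v, 0 < B v -> F v)
    (HF : exists v, F v) :
  (exists W, is_solution A F B W) <->
  (exists W, tree_like (tc A) F B W /\
             #|sol_verts W| <= 2 * #|[set v | F v]| - 1).
Proof.
split.
  case=> W [wok cnt fc].
  set Rq := [set v | F v].
  have st : forall w, w \in W -> w.1 \in Rq.
    move=> w wW; rewrite inE; apply: Hrestr; rewrite -(cnt w.1) -has_count.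
    by apply/hasP; exists w.
  have sub : Rq \subset sol_verts W.
    by apply/subsetP => f; rewrite inE => Ff; case: (fc f f Ff Ff).
  case: (ML (leqnn (msr W)) st sub) => Z [pZ aZ [FSZ subZ R5]].
  set Ws := map fst Z.
  case: FSZ => ok ac ei bnd.
  have fcs : facilities_connected F Ws.
    move=> f g Ff Fg; split; first by apply: (subsetP subZ); rewrite inE.
    by apply: R5; rewrite ?inE //; case: (fc f g Ff Fg).
  exists Ws; split; first split => //.
  - split => //.
    + apply/allP => w /mapP[pr prZ ->]; move/allP: aZ => /(_ _ prZ).
      case: pr prZ => [[x t] [x' s]] prZ /relpairE[ex ts]; subst x'.
      have : (x, s) \in W by rewrite -(perm_mem pZ); apply: (map_f snd prZ).
      move/allP: wok => h /h; rewrite /walk_ok /= => ps.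
      apply: walk_tc ps ts _ => p pw; apply: (arcsOK_noloop ok).
      apply: (warcs_sub (w := (x, t))) => //; exact: (map_f fst prZ).
    + move=> v; rewrite -(cnt v) -(permP pZ (fun w => w.1 == v)) /Ws !count_map.
      apply: eq_in_count => pr prZ /=; move/allP: aZ => /(_ _ prZ) /andP[/eqP-> _] //.
  case: HF => f0 Ff0.
  have f0S : f0 \in sol_verts Ws by apply: (subsetP subZ); rewrite inE.
  have : sol_verts Ws \subset comp (ur (sol_arcs Ws)) f0.
    apply/subsetP => y /sol_vertsP[w /mapP[pr prZ ->] yw]; rewrite inE.
    move/allP: (aZ) => /(_ _ prZ) /andP[/eqP e1 _].
    have pr2W : pr.2 \in W by rewrite -(perm_mem pZ); apply: (map_f snd prZ).
    have sR : pr.1.1 \in Rq by rewrite e1; apply: st.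
    apply: connect_trans (walk_conn (map_f fst prZ) yw).
    apply: R5 => //; first by rewrite inE.
    have Fp : F pr.1.1 by move: sR; rewrite inE.
    by case: (fc f0 pr.1.1 Ff0 Fp).
  move/subset_leq_card => h1; have h2 := bnd _ f0S.
  have h3 : #|Rq :&: comp (ur (sol_arcs Ws)) f0| <= #|Rq| by apply: subset_leq_card; apply: subsetIl.
  rewrite -/Rq; rewrite -/Ws in h2; lia.
case=> Ws [[[wok cnt fc] _ _ _] _].
case: (expand_all wok) => W [e a h].
exists W; split => //.
  by move=> v; rewrite -(cnt v) -[LHS](count_map fst (pred1 v)) e count_map.
move=> f g Ff Fg; case: (fc f g Ff Fg) => fS cfg; split.
  case/sol_vertsP: fS => ws wsW fws; case: (h ws wsW) => w wW sw.
  by apply/sol_vertsP; exists w => //; apply: sw.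
exact: (conn_mono h).
Qed.
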